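(* Let $E,F$ be Banach spaces over $\mathbb{K}$, $m\in\mathbb{N}$ and $P\in\mathcal{P}(^mE;F)$. The following are equivalent: (a) $P$ has finite rank; (b) $\Delta^1_kP$ is a finite rank operator for every $k\in\mathbb{N}$; (c) $\Delta^1_kP$ is a finite rank operator for some $k\in\mathbb{N}$.
   Context: Banach spaces are over $\mathbb{K}=\mathbb{R}$ or $\mathbb{C}$. $\mathcal{P}(^jX;Y)$ is the space of continuous $j$-homogeneous polynomials $X\to Y$, $\mathcal{P}(^jX)=\mathcal{P}(^jX;\mathbb{K})$. $\Delta^1_kP\colon\mathcal{P}(^kF)\to\mathcal{P}(^{mk}E)$ is the bounded linear operator $\Delta^1_kP(q)=q\circ P$. A polynomial (or operator) has finite rank if the linear span of its range is finite dimensional. *)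

(* Defs.v *)
From HB Require Import structures.
From mathcomp Require Import all_boot all_order all_algebra.
From mathcomp Require Import all_classical all_reals all_analysis.
From mathcomp Require Import complex.
Set Implicit Arguments. Unset Strict Implicit. Unset Printing Implicit Defensive.
Import Order.TTheory GRing.Theory Num.Theory.
Import numFieldNormedType.Exports.
Local Open Scope ring_scope.

Definition multilinear (K : numFieldType) (X Y : lmodType K) (j : nat)
  (A : ('I_j -> X) -> Y) : Prop :=
  forall (i : 'I_j) (x : 'I_j -> X) (a : K) (u v : X),
    A (fun l => if l == i then a *: u + v else x l)
    = a *: A (fun l => if l == i then u else x l)
      + A (fun l => if l == i then v else x l).

(* P is a continuous j-homogeneous polynomial X -> Y, i.e. an element of
   P(^j X; Y): P x = A(x,...,x) for some j-linear A, and P is continuous. *)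
Definition hpoly (K : numFieldType) (X Y : normedModType K) (j : nat)
  (P : X -> Y) : Prop :=
  (exists A : ('I_j -> X) -> Y, multilinear A /\ forall x, P x = A (fun _ => x))
  /\ continuous P.

Definition finite_rank (K : numFieldType) (T : Type) (Y : lmodType K)
  (f : T -> Y) : Prop :=
  exists (n : nat) (v : 'I_n -> Y),
    forall t, exists c : 'I_n -> K, f t = \sum_(i < n) c i *: v i.

(* Delta^1_k P : P(^k F) -> P(^{mk} E), q |-> q \o P, has finite rank: the span
   of { q \o P | q in P(^k F) } (inside the space of scalar functions on E)
   is finite dimensional. *)
Definition Delta_finite_rank (K : numFieldType) (E F : normedModType K)
  (k : nat) (P : E -> F) : Prop :=
  exists (n : nat) (v : 'I_n -> E -> K),
    forall q : F -> K, hpoly (X := F) (Y := K^o) k q ->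
      exists c : 'I_n -> K, forall x, q (P x) = \sum_(i < n) c i * v i x.

Definition thm13_over (K : numFieldType) : Prop :=
  forall (E F : completeNormedModType K) (m : nat) (P : E -> F),
    (0 < m)%N -> hpoly m P ->
    [/\ (finite_rank P -> forall k, (0 < k)%N -> Delta_finite_rank k P),
        ((forall k, (0 < k)%N -> Delta_finite_rank k P) ->
           exists k, (0 < k)%N /\ Delta_finite_rank k P)
      & ((exists k, (0 < k)%N /\ Delta_finite_rank k P) -> finite_rank P)].

(* Main.v *)
Require Import Defs.
From HB Require Import structures.
From mathcomp Require Import all_boot all_order all_algebra.
From mathcomp Require Import all_classical all_reals all_analysis.
From mathcomp Require Import complex.
Set Implicit Arguments. Unset Strict Implicit. Unset Printing Implicit Defensive.
Import Order.TTheory GRing.Theory Num.Theory.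
Import numFieldNormedType.Exports.
Local Open Scope ring_scope.
Section Lin.
Variables (K : numFieldType) (V : lmodType K).

Definition lin (f : V -> K) := forall a x y, f (a *: x + y) = a * f x + f y.

Variable f : V -> K.
Hypothesis hf : lin f.

Lemma lin0 : f 0 = 0.
Proof.
have := hf 1 0 0; rewrite scaler0 addr0 mul1r => h.
by apply/eqP; rewrite -(addrI (f 0) (etrans (addr0 _) h)) eqxx.
Qed.

Lemma linD x y : f (x + y) = f x + f y.
Proof. by have := hf 1 x y; rewrite scale1r mul1r. Qed.

Lemma linZ a x : f (a *: x) = a * f x.
Proof. by have := hf a x 0; rewrite addr0 lin0 addr0. Qed.

Lemma linN x : f (- x) = - f x.
Proof. by rewrite -scaleN1r linZ mulN1r. Qed.

Lemma linB x y : f (x - y) = f x - f y.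
Proof. by rewrite linD linN. Qed.

Lemma lin_sum (I : Type) (r : seq I) (P : pred I) (g : I -> V) :
  f (\sum_(i <- r | P i) g i) = \sum_(i <- r | P i) f (g i).
Proof. exact: (big_morph f linD lin0). Qed.

End Lin.

Lemma lin_comb (K : numFieldType) (V : lmodType K) (f : V -> K) (N : nat)
  (c : 'I_N -> K) (g : 'I_N -> V -> K) :
  lin f -> (forall l, lin (g l)) ->
  lin (fun y => f y - \sum_(l < N) c l * g l y).
Proof.
move=> hf hg a x y; rewrite hf.
have -> : \sum_(l < N) c l * g l (a *: x + y) =
   a * \sum_(l < N) c l * g l x + \sum_(l < N) c l * g l y.
  rewrite mulr_sumr -big_split /=; apply: eq_bigr => l _.
  by rewrite hg mulrDr !mulrA [c l * a]mulrC.
by rewrite mulrBr opprD addrACA.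
Qed.

Lemma lin_comb2 (K : numFieldType) (V : lmodType K) (f g : V -> K) (c : K) :
  lin f -> lin g -> lin (fun y => f y - c * g y).
Proof.
move=> hf hg a x y; rewrite hf hg mulrDr !mulrA [c * a]mulrC -mulrA opprD addrACA.
by rewrite mulrBr.
Qed.

Section Cont.
Variables (K : numFieldType) (V : normedModType K).

Lemma cont_sum (N : nat) (c : 'I_N -> K) (g : 'I_N -> V -> K) :
  (forall l, continuous (g l)) -> continuous (fun y => \sum_(l < N) c l * g l y).
Proof.
move=> hg; elim: N c g hg => [|N IH] c g hg.
  by under eq_fun do rewrite big_ord0; exact: cst_continuous.
under eq_fun do rewrite big_ord_recr /=.
move=> x; apply: cvgD.
  exact: (IH (fun l => c (widen_ord (leqnSn N) l)) (fun l => g (widen_ord (leqnSn N) l))).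
apply: cvgM; first exact: cst_continuous.
exact: hg.
Qed.

Lemma cont_comb (f : V -> K) (N : nat) (c : 'I_N -> K) (g : 'I_N -> V -> K) :
  continuous f -> (forall l, continuous (g l)) ->
  continuous (fun y => f y - \sum_(l < N) c l * g l y).
Proof.
move=> hf hg x; apply: cvgB; first exact: hf.
exact: cont_sum.
Qed.

Lemma cont_comb2 (f g : V -> K) (c : K) :
  continuous f -> continuous g -> continuous (fun y => f y - c * g y).
Proof.
move=> hf hg x; apply: cvgB; first exact: hf.
apply: cvgM; first exact: cst_continuous.
exact: hg.
Qed.

Lemma cont_pow (f : V -> K) (k : nat) : continuous f -> continuous (fun y => f y ^+ k).
Proof.
move=> hf; elim: k => [|k IH].
  by under eq_fun do rewrite expr0; exact: cst_continuous.
under eq_fun do rewrite exprS.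
by move=> x; apply: cvgM; [exact: hf | exact: IH].
Qed.

Lemma bounded_cont (f : V -> K) (C : K) :
  (forall x y, f (x - y) = f x - f y) -> 0 < C -> (forall x, `|f x| <= C * `|x|) ->
  continuous f.
Proof.
move=> fB C0 fC x.
apply/(@cvgrPdist_lt _ _ _ (nbhs x)) => e e_gt0; near=> z; rewrite -fB.
rewrite (le_lt_trans (fC _))// -?ltr_pdivlMl//.
by near: z; apply: cvgr_dist_lt => //; rewrite mulrC divr_gt0.
Unshelve. all: by end_near. Qed.

End Cont.

Lemma hpoly_pow (K : numFieldType) (F : normedModType K) (k : nat) (psi : F -> K) :
  lin psi -> continuous psi -> hpoly (X := F) (Y := K^o) k (fun y => psi y ^+ k).
Proof.
move=> hl hc; split.
  exists (fun y : 'I_k -> F => \prod_(l < k) psi (y l) : K^o); split.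
    move=> i x a u v /=.
    rewrite (bigD1 i) //= eqxx [X in _ = _ *: X + _](bigD1 i) //= eqxx.
    rewrite [X in _ = _ + X](bigD1 i) //= eqxx hl.
    have E : forall w, \prod_(j < k | j != i) psi (if j == i then w else x j)
        = \prod_(j < k | j != i) psi (x j).
      by move=> w; apply: eq_bigr => j /negbTE ->.
    rewrite !E; rewrite /GRing.scale /=.
    by rewrite mulrDl mulrA.
  by move=> y; rewrite prodr_const card_ord.
exact: cont_pow.
Qed.

Definition sep_prop (K : numFieldType) :=
  forall (F : normedModType K) (z : F), z != 0 ->
    exists psi : F -> K, [/\ lin psi, continuous psi & psi z = 1].

Lemma build (K : numFieldType) (E F : normedModType K) (P : E -> F) :
  sep_prop K -> ~ finite_rank P -> forall N,
  exists (x : nat -> E) (phi : nat -> F -> K),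
    (forall j, lin (phi j) /\ continuous (phi j)) /\
    (forall i j, (i < N)%N -> (j < N)%N -> phi j (P (x i)) = (i == j)%:R).
Proof.
move=> sep nfr; elim=> [|N [x [phi [hphi hd]]]].
  exists (fun _ => 0), (fun _ _ => 0); split => // j; split.
    by move=> a u w; rewrite mulr0 addr0.
  exact: cst_continuous.
have [t ht] : exists t, ~ exists c : 'I_N -> K, P t = \sum_(i < N) c i *: P (x i).
  apply/existsNP => H; apply: nfr; exists N, (fun i : 'I_N => P (x i)); exact: H.
set z := P t - \sum_(i < N) phi i (P t) *: P (x i).
have z0 : z != 0.
  apply/eqP => /eqP; rewrite subr_eq0 => /eqP Hz; apply: ht.
  by exists (fun i => phi i (P t)).
have [psi [lpsi cpsi psiz]] := sep _ z z0.
pose cc := fun l : 'I_N => psi (P (x l)).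
pose gg := fun (l : 'I_N) => phi (nat_of_ord l).
pose phiN y := psi y - \sum_(l < N) cc l * gg l y.
have lN : lin phiN.
  exact: (@lin_comb _ _ psi N cc gg lpsi (fun l => (hphi l).1)).
have cN : continuous phiN.
  exact: (@cont_comb _ _ psi N cc gg cpsi (fun l => (hphi l).2)).
have N0 : forall i, (i < N)%N -> phiN (P (x i)) = 0.
  move=> i hi; rewrite /phiN /cc /gg (bigD1 (Ordinal hi)) //= hd // eqxx mulr1.
  rewrite big1 ?addr0 ?subrr // => l hl; rewrite hd //.
  have -> : (i == l) = false by apply/negbTE; rewrite eq_sym; exact: hl.
  by rewrite mulr0.
have N1 : phiN (P t) = 1.
  rewrite /phiN /cc /gg -psiz /z (linB lpsi) (lin_sum lpsi); congr (_ - _).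
  by apply: eq_bigr => l _; rewrite linZ // mulrC.
exists (fun i => if i == N then t else x i).
exists (fun j y => if j == N then phiN y else phi j y - phi j (P t) * phiN y).
split.
  move=> j; case: eqP => _; first by split.
  split; [exact: lin_comb2 (hphi j).1 lN | exact: cont_comb2 (hphi j).2 cN].
move=> i j; rewrite ltnS leq_eqVlt => /orP[/eqP->|hi];
  rewrite ltnS leq_eqVlt => /orP[/eqP->|hj].
- by rewrite !eqxx N1.
- by rewrite eqxx (ltn_eqF hj) N1 mulr1 subrr eq_sym (ltn_eqF hj).
- by rewrite eqxx (ltn_eqF hi) N0.
- by rewrite (ltn_eqF hi) (ltn_eqF hj) N0 // mulr0 subr0 hd.
Qed.

Lemma c_to_a (K : numFieldType) (E F : normedModType K) (P : E -> F) (k : nat) :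
  sep_prop K -> (0 < k)%N -> Delta_finite_rank k P -> finite_rank P.
Proof.
move=> sep k0 [n [v hv]]; apply: contrapT => nfr.
have [x [phi [hphi hd]]] := build sep nfr n.+1.
have hc : forall j : 'I_n.+1, exists c : 'I_n -> K,
    forall y, phi j (P y) ^+ k = \sum_(i < n) c i * v i y.
  move=> j; apply: (hv (fun y => phi j y ^+ k)).
  by apply: hpoly_pow; apply hphi.
have [C hC] := choice hc.
pose M1 := \matrix_(j < n.+1, l < n) C j l.
pose M2 := \matrix_(l < n, i < n.+1) v l (x i).
have E1 : (1%:M : 'M[K]_n.+1) = M1 *m M2.
  apply/matrixP => j i; rewrite !mxE.
  under eq_bigr do rewrite !mxE.
  rewrite -hC hd ?ltn_ord //.
  have -> : ((i : nat) == j) = (j == i) by rewrite eq_sym.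
  by case: (j == i); rewrite ?expr1n // expr0n eqn0Ngt k0.
have := mxrankM_maxl M1 M2; rewrite -E1 mxrank1 => h.
have := rank_leq_col M1 => h2.
by move: (leq_trans h h2); rewrite ltnn.
Qed.

Section Expand.
Variables (K : numFieldType) (X Y : lmodType K) (k n : nat).
Variable A : ('I_k -> X) -> Y.
Hypothesis hA : multilinear A.

Lemma ml_zero i x : A (fun l => if l == i then 0 else x l) = 0.
Proof.
have := hA i x 1 0 0; rewrite scaler0 addr0 scale1r => h.
by apply/eqP; rewrite -(addrI _ (etrans (addr0 _) h)) eqxx.
Qed.

Lemma ml_sum i x (I : Type) (r : seq I) (a : I -> K) (w : I -> X) :
  A (fun l => if l == i then \sum_(j <- r) a j *: w j else x l) =
  \sum_(j <- r) a j *: A (fun l => if l == i then w j else x l).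
Proof.
elim: r => [|j r IH]; first by rewrite !big_nil ml_zero.
by rewrite !big_cons hA IH.
Qed.

Definition upd (s : nat) (f : 'I_k -> 'I_n.+1) (j : 'I_n.+1) : 'I_k -> 'I_n.+1 :=
  fun l => if (l : nat) == s then j else f l.

Fixpoint fams (s : nat) : seq ('I_k -> 'I_n.+1) :=
  match s with
  | 0 => [:: fun _ => ord0]
  | s'.+1 => [seq upd s' f j | f <- fams s', j <- index_enum 'I_n.+1]
  end.

Variables (a : 'I_n.+1 -> K) (w : 'I_n.+1 -> X).

Lemma claim s : (s <= k)%N -> forall x,
  A (fun l => if ((l : nat) < s)%N then \sum_(j < n.+1) a j *: w j else x l) =
  \sum_(f <- fams s) (\prod_(l < k | ((l : nat) < s)%N) a (f l)) *:
      A (fun l => if ((l : nat) < s)%N then w (f l) else x l).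
Proof.
elim: s => [|s IH] hs x.
  rewrite big_seq1 [X in X *: _]big_pred0 ?scale1r; try by move=> l; rewrite ltn0.
  by congr A; apply: funext => l; rewrite ltn0.
pose i0 := Ordinal hs.
pose S := \sum_(j < n.+1) a j *: w j.
have E1 : (fun l : 'I_k => if ((l : nat) < s.+1)%N then S else x l) =
          (fun l => if ((l : nat) < s)%N then S else (if l == i0 then S else x l)).
  apply: funext => l; rewrite ltnS leq_eqVlt -val_eqE /=.
  by case: (ltngtP l s).
rewrite /= E1 IH ?(ltnW hs) // big_allpairs_dep.
apply: eq_bigr => f _.
have -> : (fun l : 'I_k => if ((l : nat) < s)%N then w (f l) else if l == i0 then S else x l)
   = (fun l => if l == i0 then S else (if ((l : nat) < s)%N then w (f l) else x l)).
  by apply: funext => l; case: eqP => [->|_] //=; rewrite ltnn.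
rewrite ml_sum scaler_sumr; apply: eq_bigr => j _.
rewrite scalerA; congr (_ *: _).
  rewrite [in RHS](bigD1 i0) /=; last exact: ltnSn.
  rewrite /upd eqxx mulrC; congr (_ * _).
  apply: eq_big => l.
    by rewrite -val_eqE /= ltnS ltn_neqAle andbC.
  by move=> h; rewrite (ltn_eqF h).
congr A; apply: funext => l; rewrite /upd -val_eqE /= ltnS [(l <= s)%N]leq_eqVlt.
by case: (ltngtP l s).
Qed.

Lemma expand :
  A (fun l => \sum_(j < n.+1) a j *: w j) =
  \sum_(f <- fams k) (\prod_(l < k) a (f l)) *: A (fun l => w (f l)).
Proof.
have := claim (leqnn k) (fun _ => 0).
have -> : (fun l : 'I_k => if ((l : nat) < k)%N then \sum_(j < n.+1) a j *: w j else 0)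
  = (fun l => \sum_(j < n.+1) a j *: w j) by apply: funext => l; rewrite ltn_ord.
move=> ->; apply: eq_bigr => f _.
rewrite (eq_bigl xpredT); last by move=> l; rewrite ltn_ord.
by congr (_ *: A _); apply: funext => l; rewrite ltn_ord.
Qed.

End Expand.

Lemma a_to_b (K : numFieldType) (E F : normedModType K) (P : E -> F) (k : nat) :
  (0 < k)%N -> finite_rank P -> Delta_finite_rank k P.
Proof.
move=> k0 [n [v hv]]; have [c hc] := choice hv.
case: n v c hc {hv} => [|n] v c hc.
  exists 0, (fun _ _ => 0) => q [[A [hA hq]] _].
  exists (fun _ => 0) => y; rewrite big_ord0 hq hc big_ord0.
  have := ml_zero hA (Ordinal k0) (fun _ => 0).
  by have -> : (fun l : 'I_k => if l == Ordinal k0 then (0 : F) else 0) = (fun _ => 0)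
    by apply: funext => l; rewrite if_same.
pose fs := fams k n k.
exists (size fs), (fun (j : 'I_(size fs)) y =>
   \prod_(l < k) c y (nth (fun _ => ord0) fs j l)).
move=> q [[A [hA hq]] _].
exists (fun j => A (fun l => v (nth (fun _ => ord0) fs j l))) => y.
rewrite hq hc (expand hA (c y) v) (big_nth (fun _ => ord0)) big_mkord.
apply: eq_bigr => j _.
by rewrite /GRing.scale /= mulrC.
Qed.

From mathcomp Require Import lra.

Local Open Scope classical_set_scope.

Section HBabs.
Variables (R : realType) (V : zmodType) (s : R -> V -> V) (p : V -> R).
Hypotheses (sD : forall t x y, s t (x + y) = s t x + s t y)
 (sDl : forall t u x, s (t + u) x = s t x + s u x)
 (sA : forall t u x, s t (s u x) = s (t * u) x)
 (s1 : forall x, s 1 x = x)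
 (pD : forall x y, p (x + y) <= p x + p y)
 (pZ : forall t x, p (s t x) = `|t| * p x).

Lemma s0x x : s 0 x = 0.
Proof.
have := sDl 0 0 x; rewrite addr0 => h.
by apply/eqP; rewrite -(addrI _ (etrans (addr0 _) h)) eqxx.
Qed.

Lemma st0 t : s t 0 = 0.
Proof. by rewrite -(s0x 0) sA mulr0. Qed.

Lemma sNl t x : s (- t) x = - s t x.
Proof.
by apply/eqP; rewrite -addr_eq0 -sDl addNr s0x.
Qed.

Lemma sN1 x : s (-1) x = - x.
Proof. by rewrite sNl s1. Qed.

Lemma sNr t x : s t (- x) = - s t x.
Proof. by rewrite -sN1 sA mulrN1 sNl. Qed.

Lemma sBr t x y : s t (x - y) = s t x - s t y.
Proof. by rewrite sD sNr. Qed.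

Lemma p0 : p 0 = 0.
Proof. by rewrite -(s0x 0) pZ normr0 mul0r. Qed.

Lemma pN x : p (- x) = p x.
Proof. by rewrite -sN1 pZ normrN normr1 mul1r. Qed.

Lemma p_ge0 x : 0 <= p x.
Proof.
have := pD x (- x); rewrite subrr p0 pN => h.
by rewrite -(@pmulr_rge0 _ 2) // mulr2n mulrDl !mul1r.
Qed.

Definition adm0 (G : set (V * R)) :=
  [/\ (forall x a b, G (x, a) -> G (x, b) -> a = b),
      (forall x a y b, G (x, a) -> G (y, b) -> G (x + y, a + b)),
      (forall t x a, G (x, a) -> G (s t x, t * a)) &
      (forall x a, G (x, a) -> a <= p x)].

Definition ext (G : set (V * R)) (y : V) (c : R) : set (V * R) :=
  [set q | exists d a t, G (d, a) /\ q = (d + s t y, a + t * c)].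

Lemma ext_sub G y c : G `<=` ext G y c.
Proof.
move=> [d a] Gda; exists d, a, 0; split => //.
by rewrite s0x mul0r !addr0.
Qed.

Lemma ext_y G y c : G (0, 0) -> ext G y c (y, c).
Proof.
move=> G0; exists 0, 0, 1; split => //.
by rewrite s1 mul1r !add0r.
Qed.

Lemma ext_adm G y c : adm0 G -> (~ exists a, G (y, a)) ->
  (forall d a, G (d, a) -> a - p (d - y) <= c) ->
  (forall d a, G (d, a) -> c <= p (d + y) - a) -> adm0 (ext G y c).
Proof.
move=> [Gf GD GZ Gp] ny lb ub; split.
- move=> x a b [d1 [a1 [t1 [G1 [-> ->]]]]] [d2 [a2 [t2 [G2 [e ->]]]]].
  have [htt|hne] := eqVneq t1 t2.
    subst t2; move/addIr: e => e; subst d2.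
    by rewrite (Gf _ _ _ G1 G2).
  exfalso; apply: ny.
  have hd : s (t1 - t2) y = d2 - d1.
    rewrite sDl sNl; apply/eqP; rewrite subr_eq; apply/eqP; apply: (addrI d1).
    by rewrite e addrA [d1 + _]addrC subrK.
  have G3 : G (d2 - d1, a2 - a1).
    apply: (GD _ _ _ _ G2); rewrite -sN1 -[- a1]mulN1r; exact: GZ.
  exists ((t1 - t2)^-1 * (a2 - a1)).
  have -> : y = s ((t1 - t2)^-1) (d2 - d1).
    by rewrite -hd sA mulVf ?s1 // subr_eq0.
  exact: GZ.
- move=> x a x' b [d1 [a1 [t1 [G1 [-> ->]]]]] [d2 [a2 [t2 [G2 [-> ->]]]]].
  exists (d1 + d2), (a1 + a2), (t1 + t2); split; first exact: GD.
  by rewrite sDl mulrDl; congr (_, _); rewrite addrACA.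
- move=> u x a [d [a1 [t [G1 [-> ->]]]]].
  exists (s u d), (u * a1), (u * t); split; first exact: GZ.
  by rewrite sD sA mulrDr mulrA.
- move=> x a [d [a1 [t [G1 [-> ->]]]]].
  have [t0|t0|->] := ltgtP t 0; last first.
  + by rewrite s0x mul0r !addr0; exact: Gp.
  +
    have hG : G (s t^-1 d, t^-1 * a1) by exact: GZ.
    have h := ub _ _ hG.
    have h2 : t * c <= t * (p (s t^-1 d + y) - t^-1 * a1) by rewrite ler_pM2l.
    have e1 : t * p (s t^-1 d + y) = p (d + s t y).
      by rewrite -{1}(gtr0_norm t0) -pZ sD sA mulfV ?gt_eqF // s1.
    rewrite mulrBr e1 mulrA mulfV ?gt_eqF // mul1r in h2.
    lra.
  +
    pose u := - t.
    have u0 : 0 < u by rewrite /u oppr_gt0.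
    have hG : G (s u^-1 d, u^-1 * a1) by exact: GZ.
    have h := lb _ _ hG.
    have h2 : u * (u^-1 * a1 - p (s u^-1 d - y)) <= u * c by rewrite ler_pM2l.
    have e1 : u * p (s u^-1 d - y) = p (d + s t y).
      rewrite -{1}(gtr0_norm u0) -pZ sBr sA mulfV ?gt_eqF // s1.
      by rewrite /u sNl opprK.
    rewrite mulrBr e1 mulrA mulfV ?gt_eqF // mul1r /u in h2.
    lra.
Qed.

Lemma key_ineq G y d a d' a' : adm0 G -> G (d, a) -> G (d', a') ->
  a - p (d - y) <= p (d' + y) - a'.
Proof.
move=> [Gf GD GZ Gp] h1 h2.
have h3 := Gp _ _ (GD _ _ _ _ h1 h2).
have h4 := pD (d - y) (d' + y).
have e : d - y + (d' + y) = d + d' by rewrite addrACA addNr addr0.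
rewrite e in h4; lra.
Qed.

Lemma sup_c G y : adm0 G -> G (0, 0) -> exists c,
  (forall d a, G (d, a) -> a - p (d - y) <= c) /\
  (forall d a, G (d, a) -> c <= p (d + y) - a).
Proof.
move=> hG G0.
pose S := [set r | exists d a, G (d, a) /\ r = a - p (d - y)].
have S0 : S !=set0 by exists (0 - p (0 - y)), 0, 0.
have Sub : forall d' a', G (d', a') -> ubound S (p (d' + y) - a').
  by move=> d' a' h' r [d [a [h ->]]]; exact: key_ineq hG h h'.
exists (sup S); split.
  move=> d a h; apply: ub_le_sup; first by exists (p (0 + y) - 0); exact: Sub.
  by exists d, a.
by move=> d a h; apply: ge_sup => //; exact: Sub.
Qed.


Lemma HB_abs z : z != 0 -> exists f : V -> R,
  [/\ forall x y, f (x + y) = f x + f y, forall t x, f (s t x) = t * f x,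
      forall x, f x <= p x & f z = p z].
Proof.
move=> z0.
pose G00 : set (V * R) := [set (0, 0)].
have a00 : adm0 G00.
  split.
  - by move=> x a b [_ ->] [_ ->].
  - by move=> x a y b [-> ->] [-> ->]; rewrite /G00 /= !addr0.
  - by move=> t x a [-> ->]; rewrite /G00 /= st0 mulr0.
  - by move=> x a [-> ->]; rewrite p0.
have nz : ~ exists a, G00 (z, a).
  by move=> [a [hz _]]; move: z0; rewrite hz eqxx.
pose G1 := ext G00 z (p z).
have a1 : adm0 G1.
  apply: ext_adm => //.
  - move=> d a [-> ->]; rewrite !sub0r pN; have := p_ge0 z; lra.
  - by move=> d a [-> ->]; rewrite add0r subr0.
have G1z : G1 (z, p z).
  by exists 0, 0, 1; split => //; rewrite s1 mul1r !add0r.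
have G10 : G1 (0, 0).
  by exists 0, 0, 0; split => //; rewrite s0x mul0r !addr0.
pose P := fun G : set (V * R) => (adm0 G /\ G1 `<=` G) \/ G = set0.
have chain : forall Fm : set (set (V * R)), Fm `<=` P -> total_on Fm subset ->
    P (\bigcup_(X in Fm) X).
  move=> Fm FP Ftot.
  have memA : forall X q, Fm X -> X q -> adm0 X /\ G1 `<=` X.
    move=> X q FX Xq; case: (FP _ FX) => // X0.
    by move: Xq; rewrite X0.
  have [[X0 [FX0 hX0]]|nX] := pselect (exists X, Fm X /\ (adm0 X /\ G1 `<=` X)).
  - left; split; last first.
      by move=> q G1q; exists X0 => //; apply: hX0.2.
    have two : forall X Y q1 q2, Fm X -> Fm Y -> X q1 -> Y q2 ->
        exists Z, [/\ Fm Z, adm0 Z, Z q1 & Z q2].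
      move=> X Y q1 q2 FX FY Xq Yq; case: (Ftot _ _ FX FY) => [XY|YX].
        by exists Y; split => //; [exact: (memA _ _ FY Yq).1 | exact: XY].
      by exists X; split => //; [exact: (memA _ _ FX Xq).1 | exact: YX].
    split.
    + move=> x a b [X FX Xa] [Y FY Yb].
      have [Z [FZ [Zf _ _ _] Za Zb]] := two _ _ _ _ FX FY Xa Yb.
      exact: Zf _ _ _ Za Zb.
    + move=> x a y b [X FX Xa] [Y FY Yb].
      have [Z [FZ [_ ZD _ _] Za Zb]] := two _ _ _ _ FX FY Xa Yb.
      by exists Z => //; exact: ZD.
    + move=> t x a [X FX Xa]; exists X => //.
      by have [_ _ XZ _] := (memA _ _ FX Xa).1; exact: XZ.
    + move=> x a [X FX Xa].
      by have [_ _ _ Xp] := (memA _ _ FX Xa).1; exact: Xp.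
  - right; apply/seteqP; split => [q [X FX Xq]|q] //=.
    by exfalso; apply: nX; exists X; split => //; exact: memA FX Xq.
have [A [PA maxA]] := Zorn_bigcup chain.
have [aA G1A] : adm0 A /\ G1 `<=` A.
  case: PA => // A0; exfalso; apply: (maxA G1); last by left; split.
  rewrite A0; split; first by move=> q.
  by move=> h; exact: h _ G10.
have tot : forall x, exists a, A (x, a).
  move=> y; apply: contrapT => ny.
  have [c [lb ub]] := sup_c y aA (G1A _ G10).
  have aA' := ext_adm aA ny lb ub.
  apply: (maxA (ext A y c)); last first.
    by left; split => // q h; apply: ext_sub; exact: G1A.
  split; first exact: ext_sub.
  move=> h; apply: ny; exists c; apply: h; exact: ext_y (G1A _ G10).
have [f hf] := choice tot.
case: aA => Af AD AZ Ap.
exists f; split.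
- move=> x y; exact: Af _ _ _ (hf (x + y)) (AD _ _ _ _ (hf x) (hf y)).
- move=> t x; exact: Af _ _ _ (hf (s t x)) (AZ t _ _ (hf x)).
- move=> x; exact: Ap _ _ (hf x).
- exact: Af _ _ _ (hf z) (G1A _ G1z).
Qed.

End HBabs.

Local Open Scope complex_scope.
Notation cRe := complex.Re.
Notation cIm := complex.Im.

Section CX.
Variable R : realType.

Lemma rcD (t u : R) : (t + u)%:C = t%:C + u%:C :> R[i].
Proof. by apply/eqP; rewrite eq_complex /= addr0 !eqxx. Qed.

Lemma rcM (t u : R) : (t * u)%:C = t%:C * u%:C :> R[i].
Proof. by apply/eqP; rewrite eq_complex /= !mulr0 !mul0r subr0 addr0 !eqxx. Qed.

Lemma rcN (t : R) : (- t)%:C = - t%:C :> R[i].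
Proof. by apply/eqP; rewrite eq_complex /= oppr0 !eqxx. Qed.

Lemma rc1 : (1 : R)%:C = 1 :> R[i].
Proof. by []. Qed.

Lemma normrc (t : R) : `|t%:C| = `|t|%:C :> R[i].
Proof. by rewrite normc_def /= expr0n addr0 sqrtr_sqr. Qed.

Lemma norm_real (V : normedModType R[i]) (x : V) : `|x| = (cRe (`|x| : R[i]))%:C.
Proof.
have := normr_ge0 x; rewrite lecE => /andP[/eqP him _].
apply/eqP; rewrite eq_complex /= eqxx /=; rewrite him; by [].
Qed.

Lemma ReM_real (t : R) (w : R[i]) : cRe (t%:C * w) = t * cRe w.
Proof. by case: w => a b /=; rewrite mul0r subr0. Qed.

Lemma ReD (a b : R[i]) : cRe (a + b) = cRe a + cRe b.
Proof. by case: a; case: b. Qed.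

Lemma normi : `|'i%C| = 1 :> R[i].
Proof. by rewrite normc_def /= expr0n add0r expr1n sqrtr1. Qed.

Lemma ii : 'i%C * 'i%C = -1 :> R[i].
Proof. by rewrite -expr2 sqr_i. Qed.

End CX.

Lemma sepR (R : realType) : sep_prop R.
Proof.
move=> F z z0.
have sD : forall (t : R) (x y : F), t *: (x + y) = t *: x + t *: y.
  by move=> *; rewrite scalerDr.
have sDl : forall (t u : R) (x : F), (t + u) *: x = t *: x + u *: x.
  by move=> *; rewrite scalerDl.
have sA : forall (t u : R) (x : F), t *: (u *: x) = (t * u) *: x.
  by move=> *; rewrite scalerA.
have s1 : forall x : F, 1 *: x = x by move=> *; rewrite scale1r.
have pD : forall x y : F, `|x + y| <= `|x| + `|y| by move=> *; exact: ler_normD.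
have pZ : forall (t : R) (x : F), `|t *: x| = `|t| * `|x| by move=> *; exact: normrZ.
have [f [fD fZ fp fz]] := @HB_abs R F (fun t x => t *: x) (fun x => `|x|) sD sDl sA s1 pD pZ z z0.
have fN : forall x, f (- x) = - f x by move=> x; rewrite -scaleN1r fZ mulN1r.
have fB : forall x y, f (x - y) = f x - f y by move=> x y; rewrite fD fN.
have fb : forall x, `|f x| <= 1 * `|x|.
  move=> x; rewrite mul1r ler_norml fp andbT lerNl -fN.
  by have := fp (- x); rewrite normrN.
have fz0 : f z != 0 by rewrite fz normr_eq0.
exists (fun x => f x / f z); split.
- by move=> a x y; rewrite fD fZ mulrDl mulrA.
- have cf := bounded_cont fB ltr01 fb.
  by move=> x; apply: cvgM; [exact: cf | exact: cst_continuous].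
- by rewrite mulfV.
Qed.

From mathcomp Require Import ring.

Lemma cid (R : realType) (al be U W Uy Wy I : R[i]) : I * I = -1 ->
  (al * U + be * W + Uy) - I * (al * W + - be * U + Wy) =
  (al + I * be) * (U - I * W) + (Uy - I * Wy).
Proof.
move=> h.
have e : (al + I * be) * (U - I * W) = al * U - I * al * W + I * be * U - (I * I) * be * W.
  by ring.
by rewrite e h; ring.
Qed.

Lemma sepC (R : realType) : sep_prop R[i].
Proof.
move=> F z z0.
pose s := fun (t : R) (x : F) => t%:C *: x.
pose p := fun x : F => cRe (`|x| : R[i]).
have sD : forall t x y, s t (x + y) = s t x + s t y.
  by move=> *; rewrite /s scalerDr.
have sDl : forall t u x, s (t + u) x = s t x + s u x.
  by move=> *; rewrite /s rcD scalerDl.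
have sA : forall t u x, s t (s u x) = s (t * u) x.
  by move=> *; rewrite /s scalerA rcM.
have s1 : forall x, s 1 x = x by move=> *; rewrite /s rc1 scale1r.
have pD : forall x y, p (x + y) <= p x + p y.
  move=> x y; have := ler_normD x y; rewrite lecE ReD => /andP[_ h]; exact: h.
have pZ : forall t x, p (s t x) = `|t| * p x.
  by move=> t x; rewrite /p /s normrZ normrc ReM_real.
have [u [uD uZ up uz]] := @HB_abs R F s p sD sDl sA s1 pD pZ z z0.
have uN : forall x, u (- x) = - u x.
  by move=> x; have := uZ (-1) x; rewrite /s rcN rc1 scaleN1r mulN1r.
have ub : forall x, `|u x| <= p x.
  move=> x; rewrite ler_norml up andbT lerNl -uN.
  by have := up (- x); rewrite /p normrN.
pose g x := (u x)%:C - 'i%C * (u ('i%C *: x))%:C.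
have lg : lin g.
  move=> a x y.
  have hax : a *: x = s (cRe a) x + s (cIm a) ('i%C *: x).
    rewrite /s scalerA -scalerDl; congr (_ *: _).
    by rewrite {1}[a]complexE mulrC.
  have hiax : 'i%C *: (a *: x) = s (cRe a) ('i%C *: x) + s (- cIm a) x.
    rewrite /s !scalerA -scalerDl; congr (_ *: _).
    by rewrite {1}[a]complexE rcN mulrDr mulrA ii mulN1r mulrC.
  have e1 : u (a *: x + y) = cRe a * u x + cIm a * u ('i%C *: x) + u y.
    by rewrite uD hax uD !uZ.
  have e2 : u ('i%C *: (a *: x + y)) =
      cRe a * u ('i%C *: x) + - cIm a * u x + u ('i%C *: y).
    by rewrite scalerDr uD hiax uD !uZ.
  rewrite /g e1 e2 !rcD !rcM rcN [in RHS](complexE a).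
  by apply: cid; exact: ii.
have gB : forall x y, g (x - y) = g x - g y by move=> x y; exact: linB.
have gb : forall x, `|g x| <= 2 * `|x|.
  move=> x.
  have h1 : `|u x|%:C <= `|x| by rewrite [X in _ <= X]norm_real lecR; exact: ub.
  have h2 : `|u ('i%C *: x)|%:C <= `|x|.
    rewrite [X in _ <= X]norm_real lecR.
    by have := ub ('i%C *: x); rewrite /p normrZ normi mul1r.
  apply: (le_trans (ler_normB _ _)); rewrite normrM normi mul1r !normrc.
  by rewrite mulr_natl mulr2n; exact: lerD.
have gz0 : g z != 0.
  have : cRe (g z) = u z.
    by rewrite /g /= !mul0r !mulr0 !subr0 ?addr0.
  rewrite uz /p => hre; apply/eqP => hg0; move: hre; rewrite hg0 /=.
  have := normr_gt0 z; rewrite z0 ltcE => /andP[_] /= h hz.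
  by move: h; rewrite -hz ltxx.
exists (fun x => g x / g z); split.
- by move=> a x y; rewrite lg mulrDl mulrA.
- have cg := bounded_cont gB (ltr0Sn _ 1) gb.
  by move=> x; apply: cvgM; [exact: cg | exact: cst_continuous].
- by rewrite mulfV.
Qed.

Lemma thm13_gen (K : numFieldType) : sep_prop K -> thm13_over K.
Proof.
move=> sep E F m P m0 hP; split.
- by move=> fr k k0; exact: a_to_b.
- by move=> H; exists 1%N; split => //; exact: H.
- by move=> [k [k0 hk]]; exact: (c_to_a sep k0 hk).
Qed.

Theorem mainTheorem13 (R : realType) : thm13_over R /\ thm13_over R[i].
Proof.
split; apply: thm13_gen; [exact: sepR | exact: sepC].
Qed.
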